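(* Consider the following online algorithm for Submodular Welfare with bidders $1,\dots,n$, utilities $f_1,\dots,f_n$, and items $1,\dots,m$ arriving in this (adversarial) order. Set $S^0_j=\emptyset$ for all $j$. For $i=1,\dots,m$: set $S^i_j=S^{i-1}_j$ for all $j$; order the bidders as $j_1,\dots,j_n$ so that $f_{j_1}(i\mid S^{i-1}_{j_1})\ge f_{j_2}(i\mid S^{i-1}_{j_2})\ge\dots\ge f_{j_n}(i\mid S^{i-1}_{j_n})$; choose a random bidder $j^i$ with $\Pr[j^i=j_r]=2^{-r}$ for $r=1,\dots,n$ (with the remaining probability $2^{-n}$ no bidder is chosen); if a bidder $j^i$ was chosen and $f_{j^i}(i\mid S^{i-1}_{j^i})\ge0$, set $S^i_{j^i}\leftarrow S^i_{j^i}\cup\{i\}$. Let $O=(O_1,\dots,O_n)$ be a fixed optimal allocation, i.e., a maximizer of $\sum_j f_j(O_j)$ over pairwise disjoint $O_1,\dots,O_n\subseteq\{1,\dots,m\}$. For $i=0,\dots,m$ let $H^i_j=(O_j\cap\{1,\dots,i\})\cup S^i_j$, and write $f(S^i)=\sum_j f_j(S^i_j)$, $f(H^i)=\sum_j f_j(H^i_j)$. Define $P^i=f(S^i)-f(S^{i-1})$ and $K^i=f(H^i)-f(H^{i-1})$. Then for every $i=1,\dots,m$, $\mathbb E[K^i]\le 2\,\mathbb E[P^i]$.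
   Context: Each $f_j:2^{\{1,\dots,m\}}\to\mathbb R_{\ge0}$ is a non-negative submodular (not necessarily monotone) function, i.e., $f_j(A\cup B)+f_j(A\cap B)\le f_j(A)+f_j(B)$ for all $A,B$. Notation: $f_j(i\mid S)=f_j(S\cup\{i\})-f_j(S)$. Ties in the ordering of bidders are broken arbitrarily. *)

(* Defs.v *)
From mathcomp Require Import all_boot all_order all_algebra all_fingroup.
Set Implicit Arguments. Unset Strict Implicit. Unset Printing Implicit Defensive.
Import Order.TTheory GRing.Theory Num.Theory.
Local Open Scope ring_scope.

(* Bidders are 'I_n (bidder j+1 of the paper is ordinal j), items are 'I_m
   (item i of the paper, 1 <= i <= m, is ordinal i-1). Step k (k = 0..m-1)
   processes item k, i.e. item k+1 of the paper. *)

Definition marg (R : numDomainType) (T : finType) (g : {set T} -> R)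
  (S : {set T}) (x : T) : R := g (x |: S) - g S.

Definition submodular (R : numDomainType) (T : finType) (g : {set T} -> R) :=
  forall A B : {set T}, g (A :|: B) + g (A :&: B) <= g A + g B.

(* One step of the algorithm at step k (item k), from allocation S, with the
   bidder ordering sigma (sigma r = bidder of rank r+1) and random rank ch
   (Some r : rank r+1 chosen; None : no bidder chosen). *)
Definition alloc_step (R : numDomainType) (n m : nat)
  (f : 'I_n -> {set 'I_m} -> R) (k : nat) (S : 'I_n -> {set 'I_m})
  (sigma : {perm 'I_n}) (ch : option 'I_n) : 'I_n -> {set 'I_m} :=
  match (insub k : option 'I_m), ch with
  | Some x, Some r =>
      let j := sigma r in
      if 0 <= marg (f j) (S j) x
      then (fun j' => if j' == j then x |: S j else S j')
      else S
  | _, _ => S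
  end.

(* The ordering used at step k' is tb k' (history before k'),
   i.e. ties may be broken arbitrarily, even history-dependently. *)
Fixpoint alloc_state (R : numDomainType) (n m : nat)
  (f : 'I_n -> {set 'I_m} -> R)
  (tb : nat -> seq (option 'I_n) -> {perm 'I_n})
  (h : seq (option 'I_n)) (k : nat) : 'I_n -> {set 'I_m} :=
  match k with
  | 0 => fun _ => set0
  | k'.+1 => alloc_step f k' (alloc_state f tb h k') (tb k' (take k' h))
                        (nth None h k')
  end.

Definition tb_sorted (R : numDomainType) (n m : nat)
  (f : 'I_n -> {set 'I_m} -> R)
  (tb : nat -> seq (option 'I_n) -> {perm 'I_n}) :=
  forall (k : 'I_m) (h : seq (option 'I_n)), size h = k ->
  let S := alloc_state f tb h k in
  let sigma := tb k h in
  forall r1 r2 : 'I_n, (r1 <= r2)%N ->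
    marg (f (sigma r2)) (S (sigma r2)) k <= marg (f (sigma r1)) (S (sigma r1)) k.

Definition choice_prob (R : numFieldType) (n : nat) (ch : option 'I_n) : R :=
  match ch with
  | None => (2%:R)^-1 ^+ n
  | Some r => (2%:R)^-1 ^+ r.+1
  end.

Definition outcome_prob (R : numFieldType) (n m : nat)
  (c : {ffun 'I_m -> option 'I_n}) : R :=
  \prod_(x : 'I_m) choice_prob R (c x).

Definition history (n m : nat) (c : {ffun 'I_m -> option 'I_n}) :
  seq (option 'I_n) := [seq c x | x <- enum 'I_m].

Definition Expect (R : numFieldType) (n m : nat)
  (X : {ffun 'I_m -> option 'I_n} -> R) : R :=
  \sum_(c : {ffun 'I_m -> option 'I_n}) outcome_prob R c * X c.

Definition welfare (R : numDomainType) (n m : nat)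
  (f : 'I_n -> {set 'I_m} -> R) (S : 'I_n -> {set 'I_m}) : R :=
  \sum_(j : 'I_n) f j (S j).

Definition pairwise_disjoint (n m : nat) (O : 'I_n -> {set 'I_m}) :=
  forall j1 j2 : 'I_n, j1 != j2 -> [disjoint O j1 & O j2].

Definition optimal_allocation (R : numDomainType) (n m : nat)
  (f : 'I_n -> {set 'I_m} -> R) (O : 'I_n -> {set 'I_m}) :=
  pairwise_disjoint O /\
  forall O' : 'I_n -> {set 'I_m}, pairwise_disjoint O' ->
    welfare f O' <= welfare f O.

Definition hybrid (n m : nat) (O S : 'I_n -> {set 'I_m}) (i : nat) :
  'I_n -> {set 'I_m} :=
  fun j => (O j :&: [set x : 'I_m | (x < i)%N]) :|: S j.

Definition P_inc (R : numDomainType) (n m : nat)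
  (f : 'I_n -> {set 'I_m} -> R)
  (tb : nat -> seq (option 'I_n) -> {perm 'I_n}) (i : nat)
  (c : {ffun 'I_m -> option 'I_n}) : R :=
  welfare f (alloc_state f tb (history c) i)
  - welfare f (alloc_state f tb (history c) i.-1).

Definition K_inc (R : numDomainType) (n m : nat)
  (f : 'I_n -> {set 'I_m} -> R)
  (tb : nat -> seq (option 'I_n) -> {perm 'I_n}) (O : 'I_n -> {set 'I_m})
  (i : nat) (c : {ffun 'I_m -> option 'I_n}) : R :=
  welfare f (hybrid O (alloc_state f tb (history c) i) i)
  - welfare f (hybrid O (alloc_state f tb (history c) i.-1) i.-1).

(* Main.v *)
Require Import Defs.
From mathcomp Require Import all_boot all_order all_algebra all_fingroup.
From mathcomp Require Import lra ring.
Import Order.TTheory GRing.Theory Num.Theory.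
Local Open Scope ring_scope.
Set Implicit Arguments. Unset Strict Implicit. Unset Printing Implicit Defensive.
Lemma big_opt (R : nmodType) n (F : option 'I_n -> R) : \sum_(o : option 'I_n) F o = F None + \sum_(r : 'I_n) F (Some r).
Proof.
rewrite (bigD1 None) //=; congr (_ + _).
rewrite (reindex_omap (@Some 'I_n) id) //=.
  by apply: eq_bigl => r; rewrite eqxx.
by case.
Qed.

Lemma half_half (R : realFieldType) : 1 - (2%:R : R)^-1 = 2%:R^-1.
Proof.
by field.
Qed.

Lemma geom_sum (R : realFieldType) N :
  \sum_(r < N) (2%:R : R)^-1 ^+ r.+1 = 1 - 2%:R^-1 ^+ N.
Proof.
elim: N => [|N IH]; first by rewrite big_ord0 expr0 subrr.
rewrite big_ord_recr /= IH exprS.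
set h := (2%:R : R)^-1; set x := h ^+ N.
have hh : h + h = 1 by rewrite /h; field.
have E2 : h * x + h * x = x by rewrite -mulrDl hh mul1r.
lra.
Qed.

Lemma cp_ge0 (R : realFieldType) n (o : option 'I_n) : 0 <= choice_prob R o.
Proof. by case: o => [r|] /=; apply: exprn_ge0; rewrite invr_ge0 ler0n. Qed.

Lemma cp_sum (R : realFieldType) n : \sum_(o : option 'I_n) choice_prob R o = 1.
Proof. rewrite big_opt /= geom_sum; lra. Qed.

Definition pos (R : realFieldType) (v : R) := if 0 <= v then v else 0.

Lemma pos_ge0 (R : realFieldType) (v : R) : 0 <= pos v.
Proof. by rewrite /pos; case: ifP. Qed.
Lemma pos_ge (R : realFieldType) (v : R) : v <= pos v.
Proof. by rewrite /pos; case: ifP => // /negbT; rewrite -ltNge => /ltW. Qed.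
Lemma pos_mono (R : realFieldType) (v w : R) : v <= w -> pos v <= pos w.
Proof.
rewrite /pos => vw; case: ifP => v0; case: ifP => w0 //.
- by rewrite (le_trans v0 vw) in w0.
Qed.

Definition chosen (R : realFieldType) n (s : {perm 'I_n}) (a : 'I_n -> R)
  (o : option 'I_n) (j : 'I_n) : bool :=
  if o is Some r then (s r == j) && (0 <= a j) else false.

Lemma Pv_some (R : realFieldType) n (s : {perm 'I_n}) (a : 'I_n -> R) r :
  \sum_j (if chosen s a (Some r) j then a j else 0) = pos (a (s r)).
Proof.
rewrite (bigD1 (s r)) //= eqxx /= big1 ?addr0 //.
by move=> j /negbTE sj; rewrite eq_sym sj.
Qed.

Lemma core (R : realFieldType) n (s : {perm 'I_n}) (a d : 'I_n -> R)
  (Oin : pred 'I_n) :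
  (forall j1 j2, Oin j1 -> Oin j2 -> j1 = j2) ->
  (forall j, d j <= a j) ->
  (forall r1 r2 : 'I_n, (r1 <= r2)%N -> a (s r2) <= a (s r1)) ->
  0 <= \sum_(o : option 'I_n) choice_prob R o *
     (2%:R * \sum_j (if chosen s a o j then a j else 0)
      - \sum_j (if Oin j || chosen s a o j then d j else 0)).
Proof.
move=> Ouniq da srt.
set Pv := fun o => \sum_j (if chosen s a o j then a j else 0).
have Pv0 : forall o, 0 <= Pv o.
  move=> o; apply: sumr_ge0 => j _; case: ifP => //.
  by case: o => [r|] //= /andP[].
have K1 : forall o, \sum_j (if Oin j || chosen s a o j then d j else 0) <=
   \sum_j (if Oin j then a j else 0) + \sum_j (if chosen s a o j && ~~ Oin j then a j else 0).
  move=> o; rewrite -big_split /=; apply: ler_sum => j _.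
  case: (Oin j); case: (chosen s a o j) => /=; rewrite ?addr0 ?add0r //.
case: (pickP Oin) => [js Ojs|noO].
- have E1 : \sum_j (if Oin j then a j else 0) = a js.
    rewrite (bigD1 js) //= Ojs big1 ?addr0 // => j nj.
    by case: ifP => // Oj; rewrite (Ouniq _ _ Oj Ojs) eqxx in nj.
  have E2 : forall o, \sum_j (if chosen s a o j && ~~ Oin j then a j else 0)
       = Pv o - (if chosen s a o js then a js else 0).
    move=> o; rewrite /Pv (bigD1 js) //= Ojs andbF add0r.
    rewrite [X in _ = X - _](bigD1 js) //= [in RHS]addrC addrK.
    apply: eq_bigr => j nj; case: (boolP (Oin j)) => Oj /=.
      by rewrite (Ouniq _ _ Oj Ojs) eqxx in nj.
    by rewrite andbT.
  apply: (@le_trans _ _ (\sum_(o : option 'I_n) choice_prob R o *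
      (Pv o + (if chosen s a o js then a js else 0) - a js))).
  + set X := fun o => Pv o + (if chosen s a o js then a js else 0).
    have -> : \sum_(o : option 'I_n) choice_prob R o * (Pv o + (if chosen s a o js then a js else 0) - a js)
        = \sum_(o : option 'I_n) choice_prob R o * X o - a js.
      rewrite (eq_bigr (fun o => choice_prob R o * X o - choice_prob R o * a js)); last first.
        by move=> o _; rewrite mulrBr.
      by rewrite sumrB -mulr_suml cp_sum mul1r.
    rewrite subr_ge0 big_opt.
    have -> : X None = 0 by rewrite /X /Pv /= big1 ?addr0.
    rewrite mulr0 add0r.
    set h := (2%:R : R)^-1.
    have h0 : 0 <= h by rewrite invr_ge0 ler0n.
    set r0 := (s^-1)%g js.
    have sr0 : s r0 = js by rewrite /r0 permKV.
    set A := pos (a js).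
    apply: (@le_trans _ _ A); first exact: pos_ge.
    apply: (@le_trans _ _ (\sum_(r < n) (if (r < r0.+1)%N then h ^+ r.+1 * A else 0)
        + \sum_(r < n) (if r == r0 then h ^+ r.+1 * A else 0))).
      rewrite -big_mkcond -big_mkcond big_pred1_eq /=.
      rewrite -(big_ord_widen _ (fun i => h ^+ i.+1 * A)) ?ltn_ord //.
      rewrite -mulr_suml geom_sum; lra.
    rewrite -big_split; apply: ler_sum => r _ /=.
    rewrite /X /Pv Pv_some mulrDr; apply: lerD.
      case: ifP => rr0; last by apply: mulr_ge0; [exact: exprn_ge0|exact: pos_ge0].
      apply: ler_wpM2l; first exact: exprn_ge0.
      by apply: pos_mono; rewrite -sr0; apply: srt.
    case: eqP => [->|_]; rewrite /chosen ?sr0 ?eqxx /=.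
      by rewrite /A /pos.
    case: ifP => [/andP[_ ?]|_]; rewrite ?mulr0 //.
    by apply: mulr_ge0 => //; exact: exprn_ge0.
  + apply: ler_sum => o _; apply: ler_wpM2l; first exact: cp_ge0.
    have := K1 o; rewrite E1 E2 -/(Pv o); lra.
- apply: sumr_ge0 => o _; apply: mulr_ge0; first exact: cp_ge0.
  have := K1 o; have := Pv0 o.
  rewrite [\sum_j (if Oin j then _ else _)]big1 ?add0r; last by move=> j _; rewrite noO.
  have -> : \sum_j (if chosen s a o j && ~~ Oin j then a j else 0) = Pv o.
    by apply: eq_bigr => j _; rewrite noO andbT.
  rewrite -/(Pv o); lra.
Qed.

Section S.
Variables (R : realFieldType) (n m : nat) (f : 'I_n -> {set 'I_m} -> R)
  (tb : nat -> seq (option 'I_n) -> {perm 'I_n}).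

Lemma alloc_sub h k j y : y \in alloc_state f tb h k j -> (y < k)%N.
Proof.
elim: k j => [|k IH] j /=; first by rewrite inE.
rewrite /alloc_step; case: insubP => [x _ xk|_]; last by move/IH/ltnW.
case: (nth None h k) => [r|]; last by move/IH/ltnW.
case: ifP => _; last by move/IH/ltnW.
case: ifP => _; last by move/IH/ltnW.
by rewrite !inE => /orP[/eqP->|/IH/ltnW //]; rewrite xk.
Qed.

Lemma alloc_take h h' k : take k h = take k h' ->
  alloc_state f tb h k = alloc_state f tb h' k.
Proof.
elim: k => [|k IH] //= E.
have E' : forall k', (k' <= k.+1)%N -> take k' h = take k' h'.
  by move=> k' le; rewrite -(minn_idPl le) !take_min E.
rewrite IH ?E' //.
have -> : nth None h k = nth None h' k.
  by rewrite -(nth_take None (ltnSn k)) E nth_take.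
by [].
Qed.

Lemma hist_take (c c' : {ffun 'I_m -> option 'I_n}) k :
  (forall y : 'I_m, (y < k)%N -> c y = c' y) ->
  take k (history c) = take k (history c').
Proof.
move=> E; rewrite /history; set s := enum _; rewrite -[take k (map c s)]map_take -[take k (map c' s)]map_take; apply/eq_in_map => y yin.
apply: E; have := index_ltn yin; by rewrite /s index_enum_ord.
Qed.

Lemma hist_nth (c : {ffun 'I_m -> option 'I_n}) (x : 'I_m) :
  nth None (history c) x = c x.
Proof.
by rewrite /history (nth_map x) ?size_enum_ord ?ltn_ord // nth_ord_enum.
Qed.

Lemma size_hist (c : {ffun 'I_m -> option 'I_n}) : size (history c) = m.
Proof. by rewrite /history size_map size_enum_ord. Qed.


Definition amarg (S : 'I_n -> {set 'I_m}) (x : 'I_m) := fun j => marg (f j) (S j) x.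

Lemma step_shape (x : 'I_m) (S : 'I_n -> {set 'I_m}) (s : {perm 'I_n}) (o : option 'I_n) (j : 'I_n) :
  alloc_step f x S s o j =
  if chosen s (amarg S x) o j then x |: S j else S j.
Proof.
rewrite /alloc_step valK /chosen; case: o => [r|] //=.
have [<-|ne] := eqVneq (s r) j; first by rewrite /amarg; case: ifP => //= _; rewrite eqxx.
by case: ifP => _ //=; rewrite ifN_eq // eq_sym.
Qed.

Lemma hyb_shape (x : 'I_m) (S : 'I_n -> {set 'I_m}) (s : {perm 'I_n}) (o : option 'I_n) (O : 'I_n -> {set 'I_m}) (j : 'I_n) :
  (forall j y, y \in S j -> (y < x)%N) ->
  hybrid O (alloc_step f x S s o) x.+1 j =
  if (x \in O j) || chosen s (amarg S x) o j then x |: hybrid O S x j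
  else hybrid O S x j.
Proof.
move=> Sx; rewrite /hybrid step_shape.
apply/setP => y; have [->|yx] := eqVneq y x.
  case: (chosen _ _ _ _); case Oj: (x \in O j); rewrite /= !inE ?eqxx ?Oj ?ltnSn ?ltnn //=.
have yx' : (val y != val x) by [].
have E : (y < x.+1)%N = (y < x)%N by rewrite ltnS leq_eqVlt (negbTE yx').
case: (chosen _ _ _ _); case: (x \in O j); rewrite /= !inE ?(negbTE yx) ?E //=.
Qed.

Lemma welfare_diff (A B : 'I_n -> {set 'I_m}) (c : 'I_n -> bool) x :
  (forall j, B j = if c j then x |: A j else A j) ->
  welfare f B - welfare f A = \sum_j (if c j then marg (f j) (A j) x else 0).
Proof.
move=> E; rewrite /welfare -sumrB; apply: eq_bigr => j _; rewrite E.
by case: (c j) => //; rewrite subrr.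
Qed.

End S.

Lemma submod_marg (R : realFieldType) m (g : {set 'I_m} -> R) (S H : {set 'I_m}) (x : 'I_m) :
  submodular g -> S \subset H -> x \notin H -> marg g H x <= marg g S x.
Proof.
move=> sg SH xH; have := sg (x |: S) H.
have -> : x |: S :|: H = x |: H by rewrite -setUA (setUidPr SH).
have -> : (x |: S) :&: H = S.
  rewrite setIUl (setIidPl SH).
  have -> : [set x] :&: H = set0.
    apply/setP => y; rewrite !inE; case: eqP => // ->; exact: negbTE.
  by rewrite set0U.
rewrite /marg; lra.
Qed.

Definition upd m n (x : 'I_m) (c : {ffun 'I_m -> option 'I_n}) (o : option 'I_n) :
  {ffun 'I_m -> option 'I_n} := [ffun y => if y == x then o else c y].

Lemma resample (R : realFieldType) m n (x : 'I_m) (F : {ffun 'I_m -> option 'I_n} -> R) :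
  \sum_c F c = \sum_(c : {ffun 'I_m -> option 'I_n} | c x == None) \sum_(o : option 'I_n) F (upd x c o).
Proof.
rewrite (partition_big (fun c : {ffun 'I_m -> option 'I_n} => c x) xpredT) //=.
rewrite exchange_big /=; apply: eq_bigr => o _.
rewrite (reindex_onto (upd x ^~ o) (upd x ^~ None)); last first.
  move=> c /eqP cx; apply/ffunP => y; rewrite !ffunE; case: eqP => // ->.
  by rewrite cx.
apply: eq_bigl => c; rewrite /upd ffunE eqxx eqxx /=.
apply/eqP/eqP => [<-|cx]; first by rewrite ffunE eqxx.
by apply/ffunP => y; rewrite !ffunE; case: eqP => // ->; rewrite cx.
Qed.

Theorem lemma6 (R : realFieldType) (n m : nat)
  (f : 'I_n -> {set 'I_m} -> R)
  (tb : nat -> seq (option 'I_n) -> {perm 'I_n})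
  (O : 'I_n -> {set 'I_m}) :
  (forall (j : 'I_n) (A : {set 'I_m}), 0 <= f j A) ->
  (forall j : 'I_n, submodular (f j)) ->
  tb_sorted f tb ->
  optimal_allocation f O ->
  forall i : nat, (1 <= i <= m)%N ->
    Expect (K_inc f tb O i) <= 2%:R * Expect (P_inc f tb i).
Proof.
move=> f0 fsub srt [Odisj _] i /andP[i1 im].
case: i i1 im => [//|k] _ km.
set x : 'I_m := Ordinal km.
rewrite -subr_ge0.
have -> : 2%:R * Expect (P_inc f tb k.+1) - Expect (K_inc f tb O k.+1) =
   \sum_c outcome_prob R c * (2%:R * P_inc f tb k.+1 c - K_inc f tb O k.+1 c).
  rewrite /Expect mulr_sumr -sumrB; apply: eq_bigr => c _; ring.
rewrite (resample x); apply: sumr_ge0 => c0 /eqP c0x.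
set S := alloc_state f tb (history c0) k.
set s := tb k (take k (history c0)).
set q := \prod_(y | y != x) choice_prob R (c0 y).
have q0 : 0 <= q by apply: prodr_ge0 => y _; exact: cp_ge0.
have tk : forall o, take k (history (upd x c0 o)) = take k (history c0).
  move=> o; apply: hist_take => y yk; rewrite ffunE.
  by case: eqP => // yx; rewrite yx /= ltnn in yk.
have Sk : forall o, alloc_state f tb (history (upd x c0 o)) k = S.
  by move=> o; apply: alloc_take; rewrite tk.
have Si : forall o, alloc_state f tb (history (upd x c0 o)) k.+1 = alloc_step f x S s o.
  move=> o /=; rewrite Sk tk.
  by have := hist_nth (upd x c0 o) x; rewrite ffunE eqxx => ->.
have Sx : forall j y, y \in S j -> (y < x)%N by move=> j y /alloc_sub.
have op : forall o, outcome_prob R (upd x c0 o) = choice_prob R o * q.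
  move=> o; rewrite /outcome_prob (bigD1 x) //= ffunE eqxx; congr (_ * _).
  by apply: eq_bigr => y yx; rewrite ffunE (negbTE yx).
set a := amarg f S x.
set d := fun j => marg (f j) (hybrid O S k j) x.
have Pe : forall o, P_inc f tb k.+1 (upd x c0 o) = \sum_j (if chosen s a o j then a j else 0).
  move=> o; rewrite /P_inc Si [k.+1.-1]/= Sk.
  by apply: welfare_diff => j; exact: step_shape.
have Ke : forall o, K_inc f tb O k.+1 (upd x c0 o) =
    \sum_j (if (x \in O j) || chosen s a o j then d j else 0).
  move=> o; rewrite /K_inc Si [k.+1.-1]/= Sk.
  by apply: welfare_diff => j; exact: hyb_shape.
rewrite (eq_bigr (fun o => q * (choice_prob R o * (2%:R * \sum_j (if chosen s a o j then a j else 0) - \sum_j (if (x \in O j) || chosen s a o j then d j else 0))))); last first.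
  by move=> o _; rewrite op Pe Ke; ring.
rewrite -mulr_sumr; apply: mulr_ge0 => //.
apply: core.
- move=> j1 j2 h1 h2; apply/eqP; apply/negPn/negP => ne.
  by have := disjointFr (Odisj _ _ ne) h1; rewrite h2.
- move=> j; apply: submod_marg => //; first exact: subsetUr.
  rewrite /hybrid !inE ltnn andbF /=; apply/negP => /Sx; by rewrite ltnn.
- move=> r1 r2 le; have := srt x (take k (history c0)) _ r1 r2 le.
  rewrite size_takel ?size_hist ?(ltnW km) // => /(_ erefl).
  by rewrite (@alloc_take _ _ _ f tb (take k (history c0)) (history c0) k) // -take_min minnn.
Qed.
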